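(* Let $n\ge 2$ and let $T_1,\dots,T_{n-1}$ and $D_1,\dots,D_n$ be the Demazure–Lustig operators and the $q$-Dunkl operators described in the context. Then for $1\le i\le n-1$, $$T_i\,D_{i+1}=t\,D_i\,T_i^{-1},\qquad T_i\,D_i=D_{i+1}\,T_i+(t-1)D_i,$$ and for all $1\le i\le n-1$ and $1\le j\le n$ with $j\ne i,i+1$, $T_iD_j=D_jT_i$.
   Context: Let $n\ge1$, let $q,t$ be generic parameters (indeterminates), and let operators act on Laurent polynomials in $x=(x_1,\dots,x_n)$ with coefficients in $\mathbb{Q}(q,t)$; $x_i$ also denotes multiplication by $x_i$. Let $s_i$ ($1\le i\le n-1$) interchange $x_i$ and $x_{i+1}$, and let $\tau_i$ be the $q$-shift $(\tau_if)(x_1,\dots,x_n)=f(x_1,\dots,qx_i,\dots,x_n)$. The Demazure–Lustig operators are $T_i=t+\frac{tx_i-x_{i+1}}{x_i-x_{i+1}}(s_i-1)$, $1\le i\le n-1$; they satisfy $(T_i-t)(T_i+1)=0$, hence are invertible with $T_i^{-1}=t^{-1}-1+t^{-1}T_i$. Let $\omega=s_{n-1}\cdots s_2s_1\tau_1$ (composition of operators), and for $1\le i\le n$ let $Y_i=t^{-n+i}\,T_i\cdots T_{n-1}\,\omega\,T_1^{-1}\cdots T_{i-1}^{-1}$. For $i<j$ let $T_{ij}^{-1}=T_i^{-1}T_{i+1}^{-1}\cdots T_{j-2}^{-1}T_{j-1}^{-1}T_{j-2}^{-1}\cdots T_i^{-1}$. The $q$-Dunkl operators are $$D_i=x_i^{-1}\Bigl(1-t^{n-1}\Bigl[1+(t^{-1}-1)\sum_{j=i+1}^n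 t^{j-i}T_{ij}^{-1}\Bigr]Y_i\Bigr),\qquad 1\le i\le n,$$ so in particular $D_n=x_n^{-1}(1-t^{n-1}Y_n)$. *)

(* Defs.v *)
From HB Require Import structures.
From mathcomp Require Import all_boot all_order all_algebra.
From mathcomp Require Import mpoly.
Set Implicit Arguments. Unset Strict Implicit. Unset Printing Implicit Defensive.
Import Order.TTheory GRing.Theory FracField.
Notation "x %:F" := (@FracField.tofrac _ x).
Local Open Scope ring_scope.

Section DL.
Variables (K : fieldType) (n : nat) (q t : K).

Definition Pol := {mpoly K[n]}.
Definition RF := {fraction Pol}.

(* the variable x_k (1-based, 1 <= k <= n), as a polynomial *)
Definition xp (k : nat) : Pol :=
  oapp (fun j : 'I_n => 'X_j) 0 (insub k.-1).
Definition xr (k : nat) : RF := (xp k)%:F.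
Definition cst (c : K) : RF := (c%:MP : Pol)%:F.

Definition rf_map (f : Pol -> Pol) (r : RF) : RF :=
  (f (\n_(repr r)))%:F / (f (\d_(repr r)))%:F.

(* s_i : interchange x_i and x_{i+1} *)
Definition s_pol (i : nat) (p : Pol) : Pol :=
  p \mPo [tuple (if val j == i.-1 then xp i.+1
                 else if val j == i then xp i else 'X_j) | j < n].
Definition s_op (i : nat) : RF -> RF := rf_map (s_pol i).

(* tau_i : x_i |-> q x_i *)
Definition tau_pol (i : nat) (p : Pol) : Pol :=
  p \mPo [tuple (if val j == i.-1 then q%:MP * 'X_j else 'X_j) | j < n].
Definition tau_op (i : nat) : RF -> RF := rf_map (tau_pol i).

(* product A_1 A_2 ... A_k of operators (composition, rightmost first) *)
Definition oprod (fs : seq (RF -> RF)) : RF -> RF :=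
  foldr (fun g acc => g \o acc) id fs.

Definition T_op (i : nat) (f : RF) : RF :=
  cst t * f + (cst t * xr i - xr i.+1) / (xr i - xr i.+1) * (s_op i f - f).
Definition Tinv_op (i : nat) (f : RF) : RF :=
  cst (t^-1 - 1) * f + cst t^-1 * T_op i f.

(* omega = s_{n-1} ... s_2 s_1 tau_1 *)
Definition omega_op : RF -> RF :=
  oprod (map s_op (rev (iota 1 n.-1)) ++ [:: tau_op 1]).

(* Y_i = t^{-n+i} T_i ... T_{n-1} omega T_1^{-1} ... T_{i-1}^{-1} *)
Definition Y_op (i : nat) (f : RF) : RF :=
  cst (t ^- (n - i)) *
  oprod (map T_op (iota i (n - i)) ++ [:: omega_op] ++
         map Tinv_op (iota 1 i.-1)) f.

(* T_{ij}^{-1} = T_i^{-1} ... T_{j-1}^{-1} T_{j-2}^{-1} ... T_i^{-1} *)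
Definition Tinv_ij (i j : nat) : RF -> RF :=
  oprod (map Tinv_op (iota i (j - i)) ++ map Tinv_op (rev (iota i (j.-1 - i)))).

Definition D_op (i : nat) (f : RF) : RF :=
  (xr i)^-1 * (f - cst (t ^+ n.-1) *
     (Y_op i f + cst (t^-1 - 1) *
        \sum_(i.+1 <= j < n.+1) cst (t ^+ (j - i)) * Tinv_ij i j (Y_op i f))).

Definition laurent (r : RF) : Prop :=
  exists (p : Pol) (k : nat), r = p%:F / ((\prod_(j < n) 'X_j) ^+ k : Pol)%:F.

End DL.

(* the coefficient field Q(q,t) and the indeterminates q, t *)
Definition Qqt := {fraction {mpoly rat[2]}}.
Definition q0 : Qqt := ('X_(@ord0 1) : {mpoly rat[2]})%:F.
Definition t0 : Qqt := ('X_(@ord_max 1) : {mpoly rat[2]})%:F.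

(* Main.v *)
From HB Require Import structures.
Require Import Defs.
From mathcomp Require Import all_boot all_order all_algebra.
From mathcomp Require Import mpoly.
From mathcomp Require Import ring zify.
Set Implicit Arguments. Unset Strict Implicit. Unset Printing Implicit Defensive.
Import Order.TTheory GRing.Theory.
Local Open Scope ring_scope.

Section Frac.
Variable R : idomainType.
Lemma frac_repr (r : {fraction R}) :
  r = (\n_(repr r))%:F / (\d_(repr r))%:F.
Proof.
rewrite -[r in LHS]reprK; set x := repr r.
unlock FracField.tofrac.
transitivity (\pi_({fraction R})%qT (FracField.mulf (Ratio \n_x 1) (FracField.invf (Ratio \d_x 1)))); last first.
  by rewrite FracField.pi_mul FracField.pi_inv.
apply/eqmodP; rewrite /= /FracField.equivf /FracField.mulf /FracField.invf /=.
rewrite !numden_Ratio ?oner_neq0 ?mulr1 ?mul1r //.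
  by rewrite mulrC.
all: exact: denom_ratioP.
Qed.
End Frac.

Section RFMap.
Variables (K : fieldType) (n : nat).
Local Notation Pol := (Pol K n).
Local Notation RF := (RF K n).

Record good (f : Pol -> Pol) : Prop := Good {
  goodD : {morph f : x y / x + y};
  goodM : {morph f : x y / x * y};
  good1 : f 1 = 1;
  goodnz : forall b, b != 0 -> f b != 0 }.

Lemma good0 f : good f -> f 0 = 0.
Proof. by case=> fD _ _ _; apply: (addrI (f 0)); rewrite -fD !addr0. Qed.

Lemma rfE f : good f ->
  forall a b, b != 0 -> rf_map f (a%:F / b%:F) = (f a)%:F / (f b)%:F.
Proof.
case=> fD fM f1 fnz a b b0; rewrite /rf_map.
set r := a%:F / b%:F.
have d0 : \d_(repr r) != 0 := denom_ratioP _.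
have := frac_repr r; rewrite {1}/r => /eqP.
rewrite eqr_div ?tofrac_eq0 // -!tofracM tofrac_eq => /eqP E.
apply/eqP; rewrite eqr_div ?tofrac_eq0 ?fnz // -!tofracM -!fM tofrac_eq.
by rewrite E.
Qed.

Lemma rf_tofrac f : good f -> forall a, rf_map f (a%:F) = (f a)%:F.
Proof.
move=> fg a; have := rfE fg a (oner_neq0 _).
by rewrite tofrac1 divr1 (good1 fg) tofrac1 divr1.
Qed.

Lemma rfD f : good f -> {morph rf_map f : x y / x + y}.
Proof.
move=> fg x y; rewrite [x]frac_repr [y]frac_repr.
set a := \n_(repr x); set b := \d_(repr x).
set c := \n_(repr y); set d := \d_(repr y).
have b0 : b != 0 := denom_ratioP _. have d0 : d != 0 := denom_ratioP _.
rewrite addf_div ?tofrac_eq0 // -!tofracM -tofracD.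
rewrite !rfE ?mulf_neq0 // (goodD fg) !(goodM fg).
by rewrite addf_div ?tofrac_eq0 ?(goodnz fg) // -!tofracM -tofracD.
Qed.

Lemma rfM f : good f -> {morph rf_map f : x y / x * y}.
Proof.
move=> fg x y; rewrite [x]frac_repr [y]frac_repr.
set a := \n_(repr x); set b := \d_(repr x).
set c := \n_(repr y); set d := \d_(repr y).
have b0 : b != 0 := denom_ratioP _. have d0 : d != 0 := denom_ratioP _.
rewrite mulf_div -!tofracM.
rewrite !rfE ?mulf_neq0 // !(goodM fg).
by rewrite mulf_div -!tofracM.
Qed.

Lemma rf1 f : good f -> rf_map f 1 = 1.
Proof. by move=> fg; rewrite -tofrac1 rf_tofrac // (good1 fg). Qed.

Lemma rf0 f : good f -> rf_map f 0 = 0.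
Proof. by move=> fg; rewrite -tofrac0 rf_tofrac // good0. Qed.

Lemma rfN f : good f -> {morph rf_map f : x / - x}.
Proof.
move=> fg x; apply: (addrI (rf_map f x)).
by rewrite -rfD // !subrr rf0.
Qed.

Lemma rfB f : good f -> {morph rf_map f : x y / x - y}.
Proof. by move=> fg x y; rewrite rfD // rfN. Qed.

Lemma rfV f : good f -> {morph rf_map f : x / x^-1}.
Proof.
move=> fg x; have [->|x0] := eqVneq x 0; first by rewrite invr0 rf0 ?invr0.
have P : rf_map f x * rf_map f x^-1 = 1.
  by rewrite -rfM // mulfV //; exact: rf1.
have nz : rf_map f x != 0.
  by apply/negP=> /eqP h; move: P; rewrite h mul0r => /eqP; rewrite eq_sym oner_eq0.
move/(congr1 (fun z => (rf_map f x)^-1 * z)): P.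
by rewrite mulKf // mulr1.
Qed.

Lemma good_comp f g : good f -> good g -> good (f \o g).
Proof.
case=> fD fM f1 fnz [gD gM g1 gnz]; split=> /=.
- by move=> x y /=; rewrite gD fD.
- by move=> x y /=; rewrite gM fM.
- by rewrite /= g1 f1.
- by move=> b b0 /=; apply/fnz/gnz.
Qed.

Lemma rf_comp (f g : Pol -> Pol) (r : RF) : good f -> good g -> rf_map f (rf_map g r) = rf_map (f \o g) r.
Proof.
move=> fg gg; rewrite [r]frac_repr.
have b0 : \d_(repr r) != 0 := denom_ratioP _.
rewrite (rfE gg) // (rfE fg) ?(goodnz gg) // (rfE (good_comp fg gg)) //.
Qed.

Lemma rf_ext (f g : Pol -> Pol) (r : RF) : f =1 g -> rf_map f r = rf_map g r.
Proof. by move=> E; rewrite /rf_map !E. Qed.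

Lemma rf_id (r : RF) : rf_map id r = r.
Proof. by rewrite [RHS]frac_repr. Qed.

Definition sub (g : 'I_n -> Pol) (p : Pol) : Pol := p \mPo [tuple g j | j < n].

Lemma sub_ext g h p : g =1 h -> sub g p = sub h p.
Proof. by move=> E; rewrite /sub; congr comp_mpoly; apply: eq_mktuple. Qed.

Lemma sub_comp g h p : sub g (sub h p) = sub (fun j => sub g (h j)) p.
Proof.
rewrite /sub (comp_mpolyEX p) raddf_sum (comp_mpolyEX p) /=.
apply: eq_bigr => m _.
rewrite comp_mpolyZ; congr (_ *: _).
rewrite !comp_mpolyX rmorph_prod /=; apply: eq_bigr => i _.
by rewrite rmorphXn /= !tnth_mktuple.
Qed.

Definition xv (k : nat) : Pol := xp K n k.+1.

Lemma xvE (j : 'I_n) : xv j = 'X_j.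
Proof. by rewrite /xv /xp /= valK. Qed.

Lemma sub_xv g k (kn : (k < n)%N) : sub g (xv k) = g (Ordinal kn).
Proof.
rewrite -[in xv k]/(nat_of_ord (Ordinal kn)).
by rewrite xvE /sub comp_mpolyXU -tnth_nth tnth_mktuple.
Qed.

Definition subc (c : nat -> K) (s : nat -> nat) : Pol -> Pol :=
  sub (fun j : 'I_n => c j *: xv (s j)).

Lemma subc_xv c s k : (k < n)%N -> subc c s (xv k) = c k *: xv (s k).
Proof. by move=> kn; rewrite /subc sub_xv. Qed.

Lemma subc_ext c s c2 s2 p :
  (forall k, (k < n)%N -> c k = c2 k) -> (forall k, (k < n)%N -> s k = s2 k) ->
  subc c s p = subc c2 s2 p.
Proof. by move=> Ec Es; apply: sub_ext => j; rewrite Ec ?Es. Qed.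

Lemma subc_comp c s c2 s2 p : (forall k, (k < n)%N -> (s2 k < n)%N) ->
  subc c s (subc c2 s2 p) = subc (fun k => c2 k * c (s2 k)) (s \o s2) p.
Proof.
move=> hs; rewrite /subc sub_comp; apply: sub_ext => j /=.
rewrite {1}/sub comp_mpolyZ -/(sub _ _) (sub_xv _ (hs _ (ltn_ord j))) /=.
by rewrite scalerA.
Qed.

Lemma subc_id p : subc (fun _ => 1) id p = p.
Proof.
rewrite /subc (@sub_ext _ (fun j => 'X_j)); last by move=> j; rewrite scale1r xvE.
exact: comp_mpoly_id.
Qed.

Lemma subc_C c s a : subc c s a%:MP = a%:MP.
Proof. exact: comp_mpolyC. Qed.

Lemma good_subc c s s' :
  (forall k, (k < n)%N -> c k != 0) ->
  (forall k, (k < n)%N -> (s k < n)%N) ->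
  (forall k, (k < n)%N -> (s' k < n)%N) ->
  (forall k, (k < n)%N -> s' (s k) = k) ->
  good (subc c s).
Proof.
move=> c0 hs hs' hss; split.
- exact: rmorphD.
- exact: rmorphM.
- exact: rmorph1.
move=> b b0; apply/negP => /eqP E; move/negP: b0; apply.
have <- : subc (fun k => (c (s' k))^-1) s' (subc c s b) = b.
  rewrite subc_comp // -[RHS]subc_id; apply: subc_ext => k kn /=.
    by rewrite hss // mulfV ?c0.
  by rewrite hss.
by rewrite E /subc /sub raddf0.
Qed.

Lemma rf_subc_xr c s k : good (subc c s) -> (1 <= k <= n)%N ->
  rf_map (subc c s) (xr K n k) = cst n (c k.-1) * xr K n (s k.-1).+1.
Proof.
move=> g /andP[k1 kn].
rewrite /xr rf_tofrac // -/(xv k.-1) subc_xv; last by case: k k1 kn.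
by rewrite -mul_mpolyC tofracM.
Qed.

Lemma rf_subc_cst c s a : good (subc c s) -> rf_map (subc c s) (cst n a) = cst n a.
Proof. by move=> g; rewrite /cst rf_tofrac // subc_C. Qed.

End RFMap.

Definition swn (i k : nat) : nat := if k == i.-1 then i else if k == i then i.-1 else k.
Definition cyn (m k : nat) : nat := if k == 0 then m else if (k <= m)%N then k.-1 else k.
Definition cyi (m k : nat) : nat := if k == m then 0 else if (k < m)%N then k.+1 else k.
Ltac noif x := lazymatch x with context[if _ then _ else _] => fail | _ => idtac end.
Ltac nsolve := rewrite /swn /cyn /cyi /=; repeat match goal with
  | |- context[@eq_op _ ?x ?y] => noif x; noif y; case: (@eqP nat x y) => ? /=
  | |- context[(?x <= ?y)%N] => noif x; noif y; case: (leqP x y) => ? /=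
  end; lia.

Section Ops.
Variables (K : fieldType) (n : nat) (q : K).
Local Notation Pol := (Pol K n).
Local Notation RF := (RF K n).
Local Notation subc := (@subc K n).
Definition one : nat -> K := fun _ => 1.
Definition ctau : nat -> K := fun k => if k == 0 then q else 1.

Lemma s_polE i p : s_pol i p = subc one (swn i) p.
Proof.
rewrite /s_pol /subc /sub; congr comp_mpoly; apply: eq_mktuple => j.
rewrite /one scale1r /swn.
case: (nat_of_ord j == i.-1) => //.
case: (nat_of_ord j == i) => //.
by rewrite xvE.
Qed.

Lemma tau_pol1E p : tau_pol q 1 p = subc ctau id p.
Proof.
rewrite /tau_pol /subc /sub; congr comp_mpoly; apply: eq_mktuple => j.
rewrite /ctau /= xvE; case: (nat_of_ord j == 0) => //.
  by rewrite mul_mpolyC.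
by rewrite scale1r.
Qed.

Lemma good_s i : (0 < i < n)%N -> good (subc one (swn i)).
Proof.
move=> /andP[i0 i1]; apply: (good_subc (s' := swn i)).
- by move=> k _; rewrite oner_eq0.
- move=> k kn; nsolve.
- move=> k kn; nsolve.
- move=> k kn; nsolve.
Qed.

Hypotheses (q0 : q != 0).

Lemma good_cy m : (m < n)%N -> good (subc ctau (cyn m)).
Proof.
move=> mn; apply: (good_subc (s' := cyi m)).
- by move=> k _; rewrite /ctau; case: ifP => _ //; rewrite oner_eq0.
- move=> k kn; nsolve.
- move=> k kn; nsolve.
- move=> k kn; nsolve.
Qed.

Lemma good_tau : good (subc ctau id).
Proof.
apply: (good_subc (s' := id)) => //.
by move=> k _; rewrite /ctau; case: ifP => _ //; rewrite oner_eq0.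
Qed.

Lemma s_opE i f : s_op i f = rf_map (subc one (swn i)) f.
Proof. by apply: rf_ext => p; rewrite s_polE. Qed.

Lemma oprod_cat (l1 l2 : seq (RF -> RF)) f : oprod (l1 ++ l2) f = oprod l1 (oprod l2 f).
Proof. by elim: l1 => //= g l IH; rewrite IH. Qed.

Lemma cyn_step m k : swn m.+1 (cyn m k) = cyn m.+1 k.
Proof. nsolve. Qed.

Lemma cyc_E m f : (m < n)%N ->
  oprod (map (@s_op K n) (rev (iota 1 m))) (rf_map (subc ctau id) f)
  = rf_map (subc ctau (cyn m)) f.
Proof.
elim: m => [|m IH] mn.
  by apply: rf_ext => p; apply: subc_ext => // k _; nsolve.
have -> : iota 1 m.+1 = rcons (iota 1 m) m.+1.
  by rewrite -cats1 -(addn1 m) iotaD add1n addn1.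
rewrite rev_rcons /= IH; last by lia.
rewrite s_opE rf_comp; last 2 first.
- by apply: good_s; apply/andP; split; lia.
- by apply: good_cy; lia.
apply: rf_ext => p /=; rewrite subc_comp; last by move=> k kn; nsolve.
apply: subc_ext => k kn; first by rewrite /one mulr1.
by rewrite /= cyn_step.
Qed.

Lemma omega_opE f : (0 < n)%N -> omega_op q f = rf_map (subc ctau (cyn n.-1)) f.
Proof.
move=> n0; rewrite /omega_op oprod_cat /= -cyc_E; last by lia.
by congr oprod; apply: rf_ext => p; rewrite tau_pol1E.
Qed.

End Ops.

Section SOps.
Variables (K : fieldType) (n : nat) (q : K).
Local Notation Pol := (Pol K n).
Local Notation RF := (RF K n).
Local Notation subc := (@subc K n).
Local Notation sop := (@s_op K n).
Local Notation om := (@omega_op K n q).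
Local Notation xr := (xr K n).
Local Notation cst := (@cst K n).

Lemma cst1 : cst 1 = 1.
Proof. by rewrite /cst mpolyC1 tofrac1. Qed.
Lemma cstD a b : cst (a + b) = cst a + cst b.
Proof. by rewrite /cst mpolyCD tofracD. Qed.
Lemma cstM a b : cst (a * b) = cst a * cst b.
Proof. by rewrite /cst mpolyCM tofracM. Qed.
Lemma cstN a : cst (- a) = - cst a.
Proof. by rewrite /cst mpolyCN tofracN. Qed.
Lemma cstB a b : cst (a - b) = cst a - cst b.
Proof. by rewrite cstD cstN. Qed.
Lemma cst0 : cst 0 = 0.
Proof. by rewrite /cst mpolyC0 rmorph0. Qed.
Lemma cst_eq0 a : (cst a == 0) = (a == 0).
Proof. by rewrite /cst tofrac_eq0 mpolyC_eq0. Qed.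
Lemma cstV a : cst (a^-1) = (cst a)^-1.
Proof.
have [->|a0] := eqVneq a 0; first by rewrite invr0 cst0 invr0.
apply: (mulfI (x := cst a)); first by rewrite cst_eq0.
by rewrite -cstM !mulfV ?cst_eq0 // cst1.
Qed.
Lemma cstX a k : cst (a ^+ k) = cst a ^+ k.
Proof. elim: k => [|k IH]; by rewrite ?expr0 ?cst1 // !exprS cstM IH. Qed.

Section S.
Variable i : nat.
Hypothesis hi : (0 < i < n)%N.
Let g := @good_s K n i hi.
Lemma sopD f h : sop i (f + h) = sop i f + sop i h. Proof. by rewrite !s_opE rfD. Qed.
Lemma sopB f h : sop i (f - h) = sop i f - sop i h. Proof. by rewrite !s_opE rfB. Qed.
Lemma sopN f : sop i (- f) = - sop i f. Proof. by rewrite !s_opE rfN. Qed.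
Lemma sopM f h : sop i (f * h) = sop i f * sop i h. Proof. by rewrite !s_opE rfM. Qed.
Lemma sopV f : sop i (f^-1) = (sop i f)^-1. Proof. by rewrite !s_opE rfV. Qed.
Lemma sop0 : sop i 0 = 0. Proof. by rewrite !s_opE rf0. Qed.
Lemma sop_cst a : sop i (cst a) = cst a. Proof. by rewrite !s_opE rf_subc_cst. Qed.
Lemma sop_x k : (1 <= k <= n)%N -> sop i (xr k) = xr (swn i k.-1).+1.
Proof. by move=> hk; rewrite s_opE rf_subc_xr // /one cst1 mul1r. Qed.
Lemma sop_xl : sop i (xr i) = xr i.+1.
Proof.
case/andP: hi => h1 h2.
rewrite sop_x; last by apply/andP; split; lia.
by congr xr; nsolve.
Qed.
Lemma sop_xr : sop i (xr i.+1) = xr i.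
Proof.
case/andP: hi => h1 h2.
rewrite sop_x; last by apply/andP; split; lia.
by congr xr; nsolve.
Qed.
Lemma sop_xo k : (1 <= k <= n)%N -> k != i -> k != i.+1 -> sop i (xr k) = xr k.
Proof.
move=> hk /eqP k1 /eqP k2; case/andP: hi => h1 h2.
rewrite sop_x //; case/andP: hk => hk1 hk2.
by congr xr; nsolve.
Qed.
Lemma sopK f : sop i (sop i f) = f.
Proof.
case/andP: hi => h1 h2.
rewrite !s_opE rf_comp // -[RHS]rf_id; apply: rf_ext => p /=.
rewrite subc_comp; last by move=> k kn; nsolve.
rewrite -[RHS]subc_id; apply: subc_ext => k kn; first by rewrite /one mulr1.
by nsolve.
Qed.
End S.

Lemma sop_braid i f : (0 < i)%N -> (i.+1 < n)%N ->
  sop i (sop i.+1 (sop i f)) = sop i.+1 (sop i (sop i.+1 f)).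
Proof.
move=> h1 h2.
have g1 : good (subc (one K) (swn i)) by apply: (@good_s K n); apply/andP; split; lia.
have g2 : good (subc (one K) (swn i.+1)) by apply: (@good_s K n); apply/andP; split; lia.
rewrite !s_opE !rf_comp //; try exact: good_comp.
apply: rf_ext => p /=.
rewrite !subc_comp; try (by move=> k kn; nsolve).
apply: subc_ext => k kn; first by rewrite /one !mulr1.
by nsolve.
Qed.

Lemma sop_far i j f : (0 < i)%N -> (i.+1 < j)%N -> (j < n)%N ->
  sop i (sop j f) = sop j (sop i f).
Proof.
move=> h1 h2 h3.
have g1 : good (subc (one K) (swn i)) by apply: (@good_s K n); apply/andP; split; lia.
have g2 : good (subc (one K) (swn j)) by apply: (@good_s K n); apply/andP; split; lia.
rewrite !s_opE !rf_comp //.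
apply: rf_ext => p /=.
rewrite !subc_comp; try (by move=> k kn; nsolve).
apply: subc_ext => k kn; first by rewrite /one !mulr1.
by nsolve.
Qed.

Section Om.
Hypotheses (q0 : q != 0).
Hypothesis n0 : (0 < n)%N.
Let g : good (subc (ctau q) (cyn n.-1)).
Proof. by apply: good_cy => //; lia. Qed.
Lemma omD f h : om (f + h) = om f + om h. Proof. by rewrite !omega_opE // rfD. Qed.
Lemma omB f h : om (f - h) = om f - om h. Proof. by rewrite !omega_opE // rfB. Qed.
Lemma omN f : om (- f) = - om f. Proof. by rewrite !omega_opE // rfN. Qed.
Lemma omM f h : om (f * h) = om f * om h. Proof. by rewrite !omega_opE // rfM. Qed.
Lemma omV f : om (f^-1) = (om f)^-1. Proof. by rewrite !omega_opE // rfV. Qed.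
Lemma om_cst a : om (cst a) = cst a. Proof. by rewrite !omega_opE // rf_subc_cst. Qed.
Lemma om_x k : (2 <= k <= n)%N -> om (xr k) = xr k.-1.
Proof.
move=> /andP[h1 h2]; rewrite omega_opE // rf_subc_xr //; last by apply/andP; split; lia.
have -> : ctau q k.-1 = 1 by rewrite /ctau; case: eqP => //; lia.
by rewrite cst1 mul1r; congr xr; nsolve.
Qed.
Lemma om_s k f : (2 <= k)%N -> (k < n)%N -> om (sop k f) = sop k.-1 (om f).
Proof.
move=> h1 h2.
have g1 : good (subc (one K) (swn k)) by apply: (@good_s K n); apply/andP; split; lia.
have g2 : good (subc (one K) (swn k.-1)) by apply: (@good_s K n); apply/andP; split; lia.
rewrite !omega_opE // !s_opE !rf_comp //.
apply: rf_ext => p /=.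
rewrite !subc_comp; try (by move=> j jn; nsolve).
apply: subc_ext => j jn /=.
  rewrite /one /ctau mulr1 mul1r; congr (if _ then _ else _).
  by apply/idP/idP => /eqP H; apply/eqP; move: H; nsolve.
by nsolve.
Qed.
End Om.
End SOps.
Arguments sop0 {K n i}.
Arguments sop_x {K n i}.
Arguments sop_xl {K n i}.
Arguments sop_xr {K n i}.
Arguments sop_xo {K n i}.
Arguments cst1 {K n}.
Arguments cst0 {K n}.

Lemma alg_quad (F : fieldType) (T a b f Fa : F) :
  a - b != 0 -> b - a != 0 ->
  T * (T * f + (T * a - b) / (a - b) * (Fa - f)) + (T * a - b) / (a - b) * (T * Fa + (T * b - a) / (b - a) * (f - Fa) - (T * f + (T * a - b) / (a - b) * (Fa - f))) = (T - 1) * (T * f + (T * a - b) / (a - b) * (Fa - f)) + T * f.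
Proof. move=> h0 h1; field; by rewrite ?h0 ?h1. Qed.

Lemma alg_xinv (F : fieldType) (T a b g Ga : F) :
  a != 0 -> b != 0 -> a - b != 0 -> b - a != 0 ->
  T * ((b)^-1 * (T * g + (T * a - b) / (a - b) * (Ga - g))) + (T * a - b) / (a - b) * ((a)^-1 * (T * Ga + (T * b - a) / (b - a) * (g - Ga)) - (b)^-1 * (T * g + (T * a - b) / (a - b) * (Ga - g))) = T * ((a)^-1 * g).
Proof. move=> h0 h1 h2 h3; field; by rewrite ?h0 ?h1 ?h2 ?h3. Qed.

Lemma alg_xo (F : fieldType) (T a b e g Ga : F) :
  e != 0 -> a - b != 0 -> b - a != 0 ->
  T * ((e)^-1 * g) + (T * a - b) / (a - b) * ((e)^-1 * Ga - (e)^-1 * g) = (e)^-1 * (T * g + (T * a - b) / (a - b) * (Ga - g)).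
Proof. move=> h0 h1 h2; field; by rewrite ?h0 ?h1 ?h2. Qed.

Lemma alg_braid (F : fieldType) (T a b c f W U V Fa Fb : F) :
  a - b != 0 -> b - a != 0 -> b - c != 0 -> c - b != 0 -> a - c != 0 -> c - a != 0 ->
  T * (T * (T * f + (T * a - b) / (a - b) * (Fa - f)) + (T * b - c) / (b - c) * (T * Fb + (T * a - c) / (a - c) * (V - Fb) - (T * f + (T * a - b) / (a - b) * (Fa - f)))) + (T * a - b) / (a - b) * (T * (T * Fa + (T * b - a) / (b - a) * (f - Fa)) + (T * a - c) / (a - c) * (T * U + (T * b - c) / (b - c) * (W - U) - (T * Fa + (T * b - a) / (b - a) * (f - Fa))) - (T * (T * f + (T * a - b) / (a - b) * (Fa - f)) + (T * b - c) / (b - c) * (T * Fb + (T * a - c) / (a - c) * (V - Fb) - (T * f + (T * a - b) / (a - b) * (Fa - f))))) = T * (T * (T * f + (T * b - c) / (b - c) * (Fb - f)) + (T * a - b) / (a - b) * (T * Fa + (T * a - c) / (a - c) * (U - Fa) - (T * f + (T * b - c) / (b - c) * (Fb - f)))) + (T * b - c) / (b - c) * (T * (T * Fb + (T * c - b) / (c - b) * (f - Fb)) + (T * a - c) / (a - c) * (T * V + (T * a - b) / (a - b) * (W - V) - (T * Fb + (T * c - b) / (c - b) * (f - Fb))) - (T * (T * f + (T * b - c) / (b - c) * (Fb - f)) + (T * a - b) / (a - b) * (T * Fa + (T * a - c) / (a - c) * (U - Fa) - (T * f + (T * b - c) / (b - c) * (Fb - f))))).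
Proof. move=> h0 h1 h2 h3 h4 h5; field; by rewrite ?h0 ?h1 ?h2 ?h3 ?h4 ?h5. Qed.

Lemma alg_far (F : fieldType) (T a b d e f Fa Fj Fji : F) :
  a - b != 0 -> b - a != 0 -> e - d != 0 -> d - e != 0 ->
  T * (T * f + (T * e - d) / (e - d) * (Fj - f)) + (T * a - b) / (a - b) * (T * Fa + (T * e - d) / (e - d) * (Fji - Fa) - (T * f + (T * e - d) / (e - d) * (Fj - f))) = T * (T * f + (T * a - b) / (a - b) * (Fa - f)) + (T * e - d) / (e - d) * (T * Fj + (T * a - b) / (a - b) * (Fji - Fj) - (T * f + (T * a - b) / (a - b) * (Fa - f))).
Proof. move=> h0 h1 h2 h3; field; by rewrite ?h0 ?h1 ?h2 ?h3. Qed.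

Section TOps.
Variables (K : fieldType) (n : nat) (q t : K).
Hypotheses (tn0 : t != 0).
Local Notation Pol := (Pol K n).
Local Notation RF := (RF K n).
Local Notation sop := (@s_op K n).
Local Notation xr := (xr K n).
Local Notation cst := (@cst K n).
Local Notation T := (@T_op K n t).
Local Notation Ti := (@Tinv_op K n t).

Lemma xrE k (hk : (k.-1 < n)%N) : (0 < k)%N -> xr k = ('X_(Ordinal hk) : Pol)%:F.
Proof.
move=> k0; rewrite /xr.
have -> : xp K n k = xv K n k.-1 by case: k k0 hk.
by rewrite -[in xv K n k.-1]/(nat_of_ord (Ordinal hk)) xvE.
Qed.

Lemma xr_neq0 k : (0 < k <= n)%N -> xr k != 0.
Proof.
case/andP=> k0 kn; have hk : (k.-1 < n)%N by lia.
rewrite (xrE hk) // tofrac_eq0; apply/eqP => /(congr1 (mcoeff U_(Ordinal hk))).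
by rewrite mcoeffXU eqxx mcoeff0 => /eqP; rewrite oner_eq0.
Qed.

Lemma xr_sub_neq0 a b : (0 < a <= n)%N -> (0 < b <= n)%N -> a != b -> xr a - xr b != 0.
Proof.
case/andP=> a0 an; case/andP=> b0 bn ab.
have ha : (a.-1 < n)%N by lia. have hb : (b.-1 < n)%N by lia.
rewrite (xrE ha) // (xrE hb) // -tofracB tofrac_eq0.
apply/eqP => /(congr1 (mcoeff U_(Ordinal ha))).
rewrite mcoeffB !mcoeffXU eqxx mcoeff0.
have -> : (Ordinal hb == Ordinal ha) = false.
  by apply/negbTE; apply/eqP => -[]; move/eqP: ab; lia.
by rewrite subr0 => /eqP; rewrite oner_eq0.
Qed.

Lemma cst_t_neq0 : cst t != 0. Proof. by rewrite cst_eq0. Qed.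

Definition S (i : nat) (f : RF) : RF := locked (@s_op K n) i f.
Lemma SE i f : s_op i f = S i f. Proof. by rewrite /S -lock. Qed.

Section Tloc.
Variable i : nat.
Hypothesis hi : (0 < i < n)%N.
Lemma SD f h : S i (f + h) = S i f + S i h. Proof. by rewrite -!SE sopD. Qed.
Lemma SN f : S i (- f) = - S i f. Proof. by rewrite -!SE sopN. Qed.
Lemma SM f h : S i (f * h) = S i f * S i h. Proof. by rewrite -!SE sopM. Qed.
Lemma SV f : S i (f^-1) = (S i f)^-1. Proof. by rewrite -!SE sopV. Qed.
Lemma S0 : S i 0 = 0. Proof. by rewrite -!SE sop0. Qed.
Lemma Scst a : S i (cst a) = cst a. Proof. by rewrite -!SE sop_cst. Qed.
Lemma SK f : S i (S i f) = f. Proof. by rewrite -!SE sopK. Qed.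
Lemma Sxl : S i (xr i) = xr i.+1. Proof. by rewrite -!SE sop_xl. Qed.
Lemma Sxr : S i (xr i.+1) = xr i. Proof. by rewrite -!SE sop_xr. Qed.
Lemma Sxo k : (0 < k <= n)%N -> k != i -> k != i.+1 -> S i (xr k) = xr k.
Proof. by move=> *; rewrite -!SE sop_xo. Qed.

Lemma TE f : T i f = cst t * f + (cst t * xr i - xr i.+1) / (xr i - xr i.+1) * (S i f - f).
Proof. by rewrite /T_op SE. Qed.

Lemma TD f h : T i (f + h) = T i f + T i h.
Proof. rewrite !TE SD; ring. Qed.
Lemma TZ a f : T i (cst a * f) = cst a * T i f.
Proof. rewrite !TE SM Scst; ring. Qed.
Lemma T0 : T i 0 = 0.
Proof. rewrite !TE S0; ring. Qed.
Lemma TN f : T i (- f) = - T i f.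
Proof. rewrite !TE SN; ring. Qed.
Lemma TB f h : T i (f - h) = T i f - T i h.
Proof. by rewrite TD TN. Qed.

Let xi0 : xr i - xr i.+1 != 0.
Proof. by case/andP: hi => *; apply: xr_sub_neq0; lia. Qed.
Let xi0' : xr i.+1 - xr i != 0.
Proof. by case/andP: hi => *; apply: xr_sub_neq0; lia. Qed.

Lemma T_quad f : T i (T i f) = cst (t - 1) * T i f + cst t * f.
Proof.
rewrite !TE.
rewrite !(SD, SN, SM, SV, Scst, SK, Sxl, Sxr).
rewrite cstB cst1.
exact: (@alg_quad RF (cst t) (xr i) (xr i.+1) f (S i f) xi0 xi0').
Qed.

Lemma T_xinv g : T i ((xr i.+1)^-1 * T i g) = cst t * ((xr i)^-1 * g).
Proof.
rewrite !TE.
rewrite !(SD, SN, SM, SV, Scst, SK, Sxl, Sxr).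
case/andP: hi => *.
have ha : xr i != 0 by apply: xr_neq0; lia.
have hb : xr i.+1 != 0 by apply: xr_neq0; lia.
exact: (@alg_xinv RF (cst t) (xr i) (xr i.+1) g (S i g) ha hb xi0 xi0').
Qed.

Lemma T_xo j g : (0 < j <= n)%N -> j != i -> j != i.+1 ->
  T i ((xr j)^-1 * g) = (xr j)^-1 * T i g.
Proof.
move=> h1 h2 h3.
have e : S i (xr j) = xr j by apply: Sxo.
rewrite !TE.
rewrite !(SD, SN, SM, SV, Scst, SK, e).
have he : xr j != 0 by apply: xr_neq0; lia.
exact: (@alg_xo RF (cst t) (xr i) (xr i.+1) (xr j) g (S i g) he xi0 xi0').
Qed.
End Tloc.

Lemma T_braid i f : (0 < i)%N -> (i.+1 < n)%N ->
  T i (T i.+1 (T i f)) = T i.+1 (T i (T i.+1 f)).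
Proof.
move=> h1 h2.
have ha : (0 < i < n)%N by apply/andP; split; lia.
have hb : (0 < i.+1 < n)%N by apply/andP; split; lia.
have e1 : S i.+1 (xr i) = xr i by apply: Sxo; lia.
have e2 : S i (xr i.+2) = xr i.+2 by apply: Sxo; lia.
have eb : S i (S i.+1 (S i f)) = S i.+1 (S i (S i.+1 f)) by rewrite -!SE sop_braid.
rewrite !TE.
rewrite !(SD ha, SN ha, SM ha, SV ha, Scst ha, SK ha, Sxl ha, Sxr ha,
          SD hb, SN hb, SM hb, SV hb, Scst hb, SK hb, Sxl hb, Sxr hb, e1, e2).
rewrite eb.
have d1 : xr i - xr i.+1 != 0 by apply: xr_sub_neq0; lia.
have d2 : xr i.+1 - xr i != 0 by apply: xr_sub_neq0; lia.
have d3 : xr i.+1 - xr i.+2 != 0 by apply: xr_sub_neq0; lia.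
have d4 : xr i.+2 - xr i.+1 != 0 by apply: xr_sub_neq0; lia.
have d5 : xr i - xr i.+2 != 0 by apply: xr_sub_neq0; lia.
have d6 : xr i.+2 - xr i != 0 by apply: xr_sub_neq0; lia.
exact: (@alg_braid RF (cst t) (xr i) (xr i.+1) (xr i.+2) f (S i.+1 (S i (S i.+1 f)))
  (S i (S i.+1 f)) (S i.+1 (S i f)) (S i f) (S i.+1 f) d1 d2 d3 d4 d5 d6).
Qed.

Lemma T_far i j f : (0 < i)%N -> (i.+1 < j)%N -> (j < n)%N ->
  T i (T j f) = T j (T i f).
Proof.
move=> h1 h2 h3.
have ha : (0 < i < n)%N by apply/andP; split; lia.
have hb : (0 < j < n)%N by apply/andP; split; lia.
have e1 : S j (xr i) = xr i by apply: Sxo; lia.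
have e2 : S j (xr i.+1) = xr i.+1 by apply: Sxo; lia.
have e3 : S i (xr j) = xr j by apply: Sxo; lia.
have e4 : S i (xr j.+1) = xr j.+1 by apply: Sxo; lia.
have ef : S i (S j f) = S j (S i f) by rewrite -!SE sop_far.
rewrite !TE.
rewrite !(SD ha, SN ha, SM ha, SV ha, Scst ha,
          SD hb, SN hb, SM hb, SV hb, Scst hb, e1, e2, e3, e4).
rewrite ef.
have d1 : xr i - xr i.+1 != 0 by apply: xr_sub_neq0; lia.
have d2 : xr i.+1 - xr i != 0 by apply: xr_sub_neq0; lia.
have d3 : xr j - xr j.+1 != 0 by apply: xr_sub_neq0; lia.
have d4 : xr j.+1 - xr j != 0 by apply: xr_sub_neq0; lia.
exact: (@alg_far RF (cst t) (xr i) (xr i.+1) (xr j.+1) (xr j) f (S i f) (S j f) (S j (S i f)) d1 d2 d3 d4).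
Qed.

Section OmT.
Hypotheses (q0 : q != 0).
Lemma om_T k f : (0 < k)%N -> (k.+1 < n)%N -> omega_op q (T k.+1 f) = T k (omega_op q f).
Proof.
move=> h1 h2.
have n0 : (0 < n)%N by lia.
rewrite !TE.
rewrite !(omD q0 n0, omN q0 n0, omM q0 n0, omV q0 n0, om_cst q0 n0).
rewrite (om_x q0 n0 (k := k.+1)); last by apply/andP; split; lia.
rewrite (om_x q0 n0 (k := k.+2)); last by apply/andP; split; lia.
by rewrite -SE om_s // SE.
Qed.
End OmT.
End TOps.

Section Hecke.
Variables (K : fieldType) (n : nat) (q t : K).
Hypotheses (tn0 : t != 0) (q0 : q != 0).
Local Notation RF := (RF K n).
Local Notation xr := (xr K n).
Local Notation cst := (@cst K n).
Local Notation T := (@T_op K n t).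
Local Notation Ti := (@Tinv_op K n t).
Local Notation om := (@omega_op K n q).
Local Notation Y := (@Y_op K n q t).
Local Notation Tij := (@Tinv_ij K n t).

Lemma TT_sig : {F : nat -> RF -> RF | F = @T_op K n t}. Proof. by exists (@T_op K n t). Qed.
Lemma TI_sig : {F : nat -> RF -> RF | F = @Tinv_op K n t}. Proof. by exists (@Tinv_op K n t). Qed.
Lemma OM_sig : {F : RF -> RF | F = @omega_op K n q}. Proof. by exists (@omega_op K n q). Qed.
Definition TT := proj1_sig TT_sig.
Definition TI := proj1_sig TI_sig.
Definition OM := proj1_sig OM_sig.
Lemma TTE i f : T i f = TT i f. Proof. by rewrite /TT (proj2_sig TT_sig). Qed.
Lemma TIE i f : Ti i f = TI i f. Proof. by rewrite /TI (proj2_sig TI_sig). Qed.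
Lemma OME f : om f = OM f. Proof. by rewrite /OM (proj2_sig OM_sig). Qed.

Definition lin (F : RF -> RF) :=
  (forall f h, F (f + h) = F f + F h) /\ (forall a f, F (cst a * f) = cst a * F f).

Lemma linD F : lin F -> forall f h, F (f + h) = F f + F h. Proof. by case. Qed.
Lemma linZ F : lin F -> forall a f, F (cst a * f) = cst a * F f. Proof. by case. Qed.
Lemma lin0 F : lin F -> F 0 = 0.
Proof. by case=> _ FZ; have := FZ 0 0; rewrite cst0 !mul0r. Qed.
Lemma linN F : lin F -> forall f, F (- f) = - F f.
Proof. by case=> _ FZ f; have := FZ (-1) f; rewrite cstN cst1 !mulN1r. Qed.
Lemma linB F : lin F -> forall f h, F (f - h) = F f - F h.
Proof. by move=> FL f h; rewrite linD // linN. Qed.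
Lemma lin_sum F (I : Type) (r : seq I) (P : pred I) (G : I -> RF) : lin F ->
  F (\sum_(i <- r | P i) G i) = \sum_(i <- r | P i) F (G i).
Proof. by move=> FL; apply: big_morph; [exact: linD | exact: lin0]. Qed.
Lemma lin_comp F G : lin F -> lin G -> lin (F \o G).
Proof.
move=> FL GL; split=> [f h|a f] /=; first by rewrite !linD.
by rewrite !linZ.
Qed.
Lemma lin_id : lin id. Proof. by []. Qed.
Lemma lin_cst a F : lin F -> lin (fun f => cst a * F f).
Proof.
move=> FL; split=> [f h|b f]; first by rewrite linD // mulrDr.
by rewrite linZ // mulrCA.
Qed.


Section Idx.
Variable i : nat.
Hypothesis hi : (0 < i < n)%N.
Lemma lin_T : lin (TT i).
Proof. by split=> *; rewrite -!TTE; [exact: TD | exact: TZ]. Qed.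
Lemma TT_quad f : TT i (TT i f) = cst (t - 1) * TT i f + cst t * f.
Proof. by rewrite -!TTE T_quad. Qed.
Lemma TT_xinv g : TT i ((xr i.+1)^-1 * TT i g) = cst t * ((xr i)^-1 * g).
Proof. by rewrite -!TTE T_xinv. Qed.
Lemma TT_xo j g : (0 < j <= n)%N -> j != i -> j != i.+1 ->
  TT i ((xr j)^-1 * g) = (xr j)^-1 * TT i g.
Proof. by move=> *; rewrite -!TTE T_xo. Qed.
Lemma TI_def f : TI i f = cst (t^-1 - 1) * f + cst t^-1 * TT i f.
Proof. by rewrite -TIE -TTE. Qed.

Lemma lin_TI : lin (TI i).
Proof.
split=> [f h|a f]; rewrite !TI_def.
  by rewrite (linD lin_T) !mulrDr addrACA.
rewrite (linZ lin_T) !mulrDr; congr (_ + _); exact: mulrCA.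
Qed.

Lemma TTTI f : TT i (TI i f) = f.
Proof.
rewrite TI_def (linD lin_T) !(linZ lin_T) TT_quad mulrDr !mulrA -!cstM addrA -mulrDl -cstD.
have -> : t^-1 - 1 + t^-1 * (t - 1) = 0 by field.
by rewrite cst0 mul0r add0r mulVf // cst1 mul1r.
Qed.

Lemma TITT f : TI i (TT i f) = f.
Proof.
rewrite TI_def TT_quad mulrDr !mulrA -!cstM addrA -mulrDl -cstD.
have -> : t^-1 - 1 + t^-1 * (t - 1) = 0 by field.
by rewrite cst0 mul0r add0r mulVf // cst1 mul1r.
Qed.

Lemma TT_TI h : TT i h = cst t * TI i h + cst (t - 1) * h.
Proof.
rewrite TI_def mulrDr !mulrA -!cstM mulfV // cst1 mul1r addrAC -mulrDl -cstD.
have -> : t * (t^-1 - 1) + (t - 1) = 0 by field.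
by rewrite cst0 mul0r add0r.
Qed.

Lemma TI_quad u : TI i (TI i u) = cst (t^-1 - 1) * TI i u + cst t^-1 * u.
Proof. by rewrite [in LHS]TI_def TTTI. Qed.
End Idx.

Lemma TT_far a b f : (0 < a < n)%N -> (0 < b < n)%N -> (a.+1 < b)%N || (b.+1 < a)%N ->
  TT a (TT b f) = TT b (TT a f).
Proof.
move=> ha hb /orP[h|h]; rewrite -!TTE.
  by apply: T_far => //; lia.
by symmetry; apply: T_far => //; lia.
Qed.

Lemma TT_TI_far a b f : (0 < a < n)%N -> (0 < b < n)%N -> (a.+1 < b)%N || (b.+1 < a)%N ->
  TT a (TI b f) = TI b (TT a f).
Proof.
move=> ha hb h.
by rewrite !TI_def (linD (lin_T ha)) (linZ (lin_T ha)) (linZ (lin_T ha)) TT_far.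
Qed.

Lemma TI_far a b f : (0 < a < n)%N -> (0 < b < n)%N -> (a.+1 < b)%N || (b.+1 < a)%N ->
  TI a (TI b f) = TI b (TI a f).
Proof.
move=> ha hb h.
by rewrite [LHS](TI_def a) [in RHS](TI_def a) (linD (lin_TI hb)) !(linZ (lin_TI hb)) TT_TI_far.
Qed.

Lemma TT_braid a f : (0 < a)%N -> (a.+1 < n)%N ->
  TT a (TT a.+1 (TT a f)) = TT a.+1 (TT a (TT a.+1 f)).
Proof. by move=> *; rewrite -!TTE T_braid. Qed.

Lemma mixed1 a f : (0 < a)%N -> (a.+1 < n)%N ->
  TT a.+1 (TI a (TI a.+1 f)) = TI a (TI a.+1 (TT a f)).
Proof.
move=> h1 h2.
have ha : (0 < a < n)%N by lia.
have hb : (0 < a.+1 < n)%N by lia.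
set X := TT a.+1 _.
have E : TT a.+1 (TT a X) = TT a f.
  by rewrite /X -TT_braid // TTTI // TTTI.
by rewrite -E !TITT.
Qed.

Lemma mixed2 a f : (0 < a)%N -> (a.+1 < n)%N ->
  TI a.+1 (TI a (TT a.+1 f)) = TT a (TI a.+1 (TI a f)).
Proof.
move=> h1 h2.
have ha : (0 < a < n)%N by lia.
have hb : (0 < a.+1 < n)%N by lia.
set Z := TT a _.
have E : TT a (TT a.+1 Z) = TT a.+1 f.
  by rewrite /Z TT_braid // TTTI // TTTI.
by rewrite -E !TITT.
Qed.

Hypothesis n0 : (0 < n)%N.
Lemma lin_OM : lin OM.
Proof.
split=> [f h|a f]; rewrite -!OME; first exact: omD.
by rewrite omM // om_cst.
Qed.

Lemma OM_TT k f : (0 < k)%N -> (k.+1 < n)%N -> OM (TT k.+1 f) = TT k (OM f).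
Proof. by move=> *; rewrite -!OME -!TTE om_T. Qed.


Lemma oprod_lin_map (G : nat -> RF -> RF) (s : seq nat) :
  (forall k, k \in s -> lin (G k)) -> lin (oprod (map G s)).
Proof.
elim: s => [|k s IH] H /=; first exact: lin_id.
apply: (lin_comp (F := G k) (G := oprod (map G s))).
  by apply: H; rewrite inE eqxx.
by apply: IH => j js; apply: H; rewrite inE js orbT.
Qed.

Lemma oprod_comm_map (F : RF -> RF) (G : nat -> RF -> RF) (s : seq nat) f :
  (forall k, k \in s -> forall g, F (G k g) = G k (F g)) ->
  F (oprod (map G s) f) = oprod (map G s) (F f).
Proof.
elim: s => [|k s IH] H //=.
rewrite H; last by rewrite inE eqxx.
by rewrite IH // => j js g; apply: H; rewrite inE js orbT.
Qed.

Lemma oprod_ext (G G' : nat -> RF -> RF) s f : (forall k g, G k g = G' k g) ->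
  oprod (map G s) f = oprod (map G' s) f.
Proof. by move=> E; elim: s => //= k s IH; rewrite IH E. Qed.

Definition Tp a b f := oprod (map TT (iota a b)) f.
Definition Up a b f := oprod (map TI (iota a b)) f.

Lemma Tp_cat a b c f : Tp a (b + c) f = Tp a b (Tp (a + b) c f).
Proof. by rewrite /Tp iotaD map_cat oprod_cat. Qed.
Lemma Up_cat a b c f : Up a (b + c) f = Up a b (Up (a + b) c f).
Proof. by rewrite /Up iotaD map_cat oprod_cat. Qed.
Lemma Tp_S a b f : Tp a b.+1 f = TT a (Tp a.+1 b f). Proof. by []. Qed.
Lemma Up_S a b f : Up a b.+1 f = TI a (Up a.+1 b f). Proof. by []. Qed.
Lemma Tp0 a f : Tp a 0 f = f. Proof. by []. Qed.
Lemma Up0 a f : Up a 0 f = f. Proof. by []. Qed.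

Lemma lin_Tp a b : (0 < a)%N -> (a + b <= n)%N -> lin (Tp a b).
Proof.
move=> h1 h2; apply: oprod_lin_map => k; rewrite mem_iota => hk.
by apply: lin_T; lia.
Qed.
Lemma lin_Up a b : (0 < a)%N -> (a + b <= n)%N -> lin (Up a b).
Proof.
move=> h1 h2; apply: oprod_lin_map => k; rewrite mem_iota => hk.
by apply: lin_TI; lia.
Qed.

Lemma TT_Tp_above i a b f : (0 < i)%N -> (i.+1 < a)%N -> (a + b <= n)%N ->
  TT i (Tp a b f) = Tp a b (TT i f).
Proof.
move=> h1 h2 h3; apply: oprod_comm_map => k; rewrite mem_iota => hk g.
by apply: TT_far; lia.
Qed.
Lemma TT_Tp_below i a b f : (0 < a)%N -> (a + b < i)%N -> (i < n)%N ->
  TT i (Tp a b f) = Tp a b (TT i f).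
Proof.
move=> h1 h2 h3; apply: oprod_comm_map => k; rewrite mem_iota => hk g.
by apply: TT_far; lia.
Qed.
Lemma TT_Up_above i a b f : (0 < i)%N -> (i.+1 < a)%N -> (a + b <= n)%N ->
  TT i (Up a b f) = Up a b (TT i f).
Proof.
move=> h1 h2 h3; apply: oprod_comm_map => k; rewrite mem_iota => hk g.
by apply: TT_TI_far; lia.
Qed.
Lemma TT_Up_below i a b f : (0 < a)%N -> (a + b < i)%N -> (i < n)%N ->
  TT i (Up a b f) = Up a b (TT i f).
Proof.
move=> h1 h2 h3; apply: oprod_comm_map => k; rewrite mem_iota => hk g.
by apply: TT_TI_far; lia.
Qed.

Lemma YY_sig : {F : nat -> RF -> RF | F = @Y_op K n q t}. Proof. by exists (@Y_op K n q t). Qed.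
Definition YY := proj1_sig YY_sig.
Lemma YYE i f : Y i f = YY i f. Proof. by rewrite /YY (proj2_sig YY_sig). Qed.
Lemma YY_def i f : YY i f = cst (t ^- (n - i)) * Tp i (n - i) (OM (Up 1 i.-1 f)).
Proof.
rewrite -YYE /Y_op oprod_cat /= -OME /Tp /Up.
by rewrite (oprod_ext _ _ (@TTE)) (oprod_ext _ _ (@TIE)).
Qed.

Lemma lin_YY i : (0 < i <= n)%N -> lin (YY i).
Proof.
move=> hi.
have L : lin (Tp i (n - i) \o (OM \o Up 1 i.-1)).
  apply: lin_comp; first by apply: lin_Tp; lia.
  apply: lin_comp; first exact: lin_OM.
  by apply: lin_Up; lia.
by split=> [f h|a f]; rewrite !YY_def -!/((Tp i (n - i) \o (OM \o Up 1 i.-1)) _) ?(linD L) ?(linZ L);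
  [rewrite mulrDr | rewrite mulrCA].
Qed.


Lemma Up_last a b f : Up a b.+1 f = Up a b (TI (a + b) f).
Proof. by rewrite -(addn1 b) Up_cat. Qed.

Lemma YR i f : (0 < i < n)%N -> TT i (YY i.+1 (TT i f)) = cst t * YY i f.
Proof.
move=> hi.
rewrite !YY_def /=.
have -> : Up 1 i (TT i f) = Up 1 i.-1 f.
  case: i hi => // i hi /=.
  by rewrite Up_last add1n TITT.
rewrite (linZ (lin_T hi)).
have -> : (n - i = (n - i.+1).+1)%N by lia.
rewrite Tp_S mulrA -cstM; congr (cst _ * _).
by rewrite exprS invfM mulrA mulfV // mul1r.
Qed.

Lemma Up_split3 m i g : (0 < i)%N -> (i.+1 <= m)%N ->
  Up 1 m g = Up 1 i.-1 (TI i (TI i.+1 (Up i.+2 (m - i.+1) g))).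
Proof.
move=> h1 h2.
have E : m = (i.-1 + (m - i.+1).+2)%N by lia.
rewrite {1}E Up_cat !Up_S.
have -> : (1 + i.-1)%N = i by lia.
by [].
Qed.

Lemma Tp_split3 j k g : (0 < j)%N -> (j <= k)%N -> (k.+1 < n)%N ->
  Tp j (n - j) g = Tp j (k - j) (TT k (TT k.+1 (Tp k.+2 (n - k.+2) g))).
Proof.
move=> h1 h2 h3.
have E : (n - j = (k - j) + (n - k.+2).+2)%N by lia.
rewrite E Tp_cat !Tp_S.
have -> : (j + (k - j))%N = k by lia.
by [].
Qed.

Lemma YC i j f : (0 < i < n)%N -> (0 < j <= n)%N -> j != i -> j != i.+1 ->
  TT i (YY j f) = YY j (TT i f).
Proof.
move=> hi hj h1 h2; rewrite !YY_def (linZ (lin_T hi)); congr (_ * _).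
case: (ltnP i.+1 j) => hij.
- rewrite TT_Tp_above; [|lia|lia|lia].
  rewrite -OM_TT; [|lia|lia].
  congr (Tp _ _ (OM _)).
  rewrite !(@Up_split3 j.-1 i); [|lia|lia|lia|lia].
  rewrite TT_Up_below; [|lia|lia|lia].
  rewrite mixed1; [|lia|lia].
  by rewrite TT_Up_above; [|lia|lia|lia].
- have hji : (j < i)%N by move/eqP: h1 => h1; lia.
  case: i hi h1 h2 hij hji => // k hk h1 h2 hij hji.
  rewrite !(@Tp_split3 j k); [|lia|lia|lia|lia|lia|lia].
  rewrite TT_Tp_below; [|lia|lia|lia].
  rewrite -TT_braid; [|lia|lia].
  rewrite TT_Tp_above; [|lia|lia|lia].
  rewrite -OM_TT; [|lia|lia].
  by rewrite TT_Up_below; [|lia|lia|lia].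
Qed.


Lemma TTij_sig : {F : nat -> nat -> RF -> RF | F = @Tinv_ij K n t}.
Proof. by exists (@Tinv_ij K n t). Qed.
Definition TTij := proj1_sig TTij_sig.
Lemma TTijE i j f : Tij i j f = TTij i j f. Proof. by rewrite /TTij (proj2_sig TTij_sig). Qed.
Definition Ur a b f := oprod (map TI (rev (iota a b))) f.
Lemma TTij_def i j f : TTij i j f = Up i (j - i) (Ur i (j.-1 - i) f).
Proof.
rewrite -TTijE /Tinv_ij oprod_cat /Up /Ur.
by rewrite (oprod_ext _ _ (@TIE)) (oprod_ext _ _ (@TIE)).
Qed.
Lemma Ur_S a b f : Ur a b.+1 f = Ur a.+1 b (TI a f).
Proof. by rewrite /Ur /= rev_cons -cats1 map_cat oprod_cat. Qed.
Lemma Ur0 a f : Ur a 0 f = f. Proof. by []. Qed.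

Lemma TTij_first j f : TTij j j.+1 f = TI j f.
Proof. by rewrite TTij_def subSnn /= subnn. Qed.

Lemma TTij_rec j k f : (j.+2 <= k)%N -> TTij j k f = TI j (TTij j.+1 k (TI j f)).
Proof.
move=> h; rewrite !TTij_def.
have -> : (k - j = (k - j.+1).+1)%N by lia.
have -> : (k.-1 - j = (k.-1 - j.+1).+1)%N by lia.
by rewrite Up_S Ur_S.
Qed.

Lemma lin_Ur a b : (0 < a)%N -> (a + b <= n)%N -> lin (Ur a b).
Proof.
move=> h1 h2; apply: oprod_lin_map => k; rewrite mem_rev mem_iota => hk.
by apply: lin_TI; lia.
Qed.

Lemma lin_TTij j k : (0 < j)%N -> (j < k)%N -> (k <= n)%N -> lin (TTij j k).
Proof.
move=> h1 h0 h2.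
have L : lin (Up j (k - j) \o Ur j (k.-1 - j)).
  by apply: lin_comp; [apply: lin_Up | apply: lin_Ur]; lia.
by split=> *; rewrite !TTij_def -!/((Up j (k - j) \o Ur j (k.-1 - j)) _) ?(linD L) ?(linZ L).
Qed.

Lemma TT_TTij_above i j k f : (0 < i)%N -> (i.+1 < j)%N -> (k <= n)%N ->
  TT i (TTij j k f) = TTij j k (TT i f).
Proof.
move=> h1 h2 h3; rewrite !TTij_def.
rewrite /Up oprod_comm_map; last first.
  by move=> m; rewrite mem_iota => hm g; apply: TT_TI_far; lia.
congr oprod; rewrite /Ur oprod_comm_map //.
by move=> m; rewrite mem_rev mem_iota => hm g; apply: TT_TI_far; lia.
Qed.

Lemma SS_sig : {F : nat -> RF -> RF |
  forall j g, F j g = \sum_(j.+1 <= k < n.+1) cst (t ^+ (k - j)) * TTij j k g}.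
Proof. by exists (fun j g => \sum_(j.+1 <= k < n.+1) cst (t ^+ (k - j)) * TTij j k g). Qed.
Definition SS := proj1_sig SS_sig.
Lemma SS_def j g : SS j g = \sum_(j.+1 <= k < n.+1) cst (t ^+ (k - j)) * TTij j k g.
Proof. exact: (proj2_sig SS_sig). Qed.

Lemma lin_SS j : (0 < j)%N -> lin (SS j).
Proof.
move=> hj; split=> [f h|a f]; rewrite !SS_def.
  rewrite -big_split; apply: eq_big_nat => k hk /=.
  rewrite (linD (lin_TTij _ _ _)); [exact: mulrDr | lia..].
rewrite mulr_sumr; apply: eq_big_nat => k hk /=.
rewrite (linZ (lin_TTij _ _ _)); [exact: mulrCA | lia..].
Qed.

Lemma S_rec j g : (0 < j < n)%N ->
  SS j g = cst t * TI j g + cst t * TI j (SS j.+1 (TI j g)).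
Proof.
move=> hj; rewrite !SS_def big_ltn; last by lia.
rewrite subSnn expr1 TTij_first; congr (_ + _).
rewrite (lin_sum _ _ _ (lin_TI hj)) mulr_sumr; apply: eq_big_nat => k hk /=.
rewrite TTij_rec; last by lia.
rewrite (linZ (lin_TI hj)) mulrA -cstM.
have -> : (k - j = (k - j.+1).+1)%N by lia.
by rewrite exprS.
Qed.

Lemma S_above i j g : (0 < i < n)%N -> (i.+1 < j)%N ->
  TT i (SS j g) = SS j (TT i g).
Proof.
move=> hi h; rewrite !SS_def (lin_sum _ _ _ (lin_T hi)); apply: eq_big_nat => k hk.
by rewrite (linZ (lin_T hi)) TT_TTij_above //; lia.
Qed.

Lemma S_base a g : (0 < a)%N -> (a.+2 < n.+1)%N ->
  TT a.+1 (SS a g) = SS a (TT a.+1 g).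
Proof.
move=> h1 h2.
have ha : (0 < a < n)%N by lia.
have hb : (0 < a.+1 < n)%N by lia.
rewrite !(S_rec _ ha) !(S_rec _ hb).
rewrite !(linD (lin_TI ha), linZ (lin_TI ha)) !(linD (lin_T hb), linZ (lin_T hb)).
set W := SS a.+2.
have E1 : TT a.+1 (TI a (TI a.+1 (TI a g))) = TI a (TI a.+1 g).
  by rewrite mixed1; [rewrite TTTI | lia | lia].
have E2 : TT a.+1 (TI a (TI a.+1 (W (TI a.+1 (TI a g))))) =
          TI a (TI a.+1 (W (TI a.+1 (TI a (TT a.+1 g))))).
  rewrite mixed1; [|lia|lia].
  rewrite /W S_above; [|lia|lia].
  by rewrite -mixed2; [|lia|lia].
have E3 : TI a (TI a.+1 (TI a (TT a.+1 g))) = TI a.+1 (TI a g).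
  by rewrite mixed2; [rewrite TITT | lia | lia].
have E4 : TT a.+1 (TI a g) = cst t * TI a.+1 (TI a g) + cst (t - 1) * TI a g.
  exact: TT_TI.
have E5 : TI a (TT a.+1 g) = cst t * TI a (TI a.+1 g) + cst (t - 1) * TI a g.
  by rewrite TT_TI (linD (lin_TI ha)) !(linZ (lin_TI ha)).
rewrite E2 E1 E3 E4 E5.
ring.
Qed.

Lemma S_comm i j g : (0 < j)%N -> (j < i)%N -> (i < n)%N ->
  TT i (SS j g) = SS j (TT i g).
Proof.
move=> hj hji hin.
have hi : (0 < i < n)%N by lia.
suff H : forall d j', (0 < j')%N -> i = (j' + d.+1)%N -> forall g, TT i (SS j' g) = SS j' (TT i g).
  by apply: (H (i - j).-1) => //; lia.
elim=> [|d IH] j' hj' E g'.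
  have -> : i = j'.+1 by lia.
  by apply: S_base; lia.
have hj'n : (0 < j' < n)%N by lia.
have F1 : forall h, TT i (TI j' h) = TI j' (TT i h).
  by move=> h; apply: TT_TI_far; lia.
rewrite !(S_rec _ hj'n) (linD (lin_T hi)) !(linZ (lin_T hi)) !F1 IH //; last by lia.
by rewrite F1.
Qed.

Lemma DD_sig : {F : nat -> RF -> RF | forall i f, F i f =
  (xr i)^-1 * (f - cst (t ^+ n.-1) * (YY i f + cst (t^-1 - 1) * SS i (YY i f)))}.
Proof. by exists (fun i f =>
  (xr i)^-1 * (f - cst (t ^+ n.-1) * (YY i f + cst (t^-1 - 1) * SS i (YY i f)))). Qed.
Definition DD := proj1_sig DD_sig.
Lemma DD_def i f : DD i f =
  (xr i)^-1 * (f - cst (t ^+ n.-1) * (YY i f + cst (t^-1 - 1) * SS i (YY i f))).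
Proof. exact: (proj2_sig DD_sig). Qed.

Lemma D_opE i f : D_op q t i f = DD i f.
Proof.
rewrite DD_def /D_op !YYE SS_def.
by under eq_bigr => k _ do rewrite TTijE.
Qed.

Lemma Ht X : cst t * (cst t^-1 * X) = X.
Proof. by rewrite mulrA -cstM mulfV // cst1 mul1r. Qed.

Lemma R1 i f : (0 < i < n)%N -> TT i (DD i.+1 f) = cst t * DD i (TI i f).
Proof.
move=> hi.
have hX : forall h, TT i ((xr i.+1)^-1 * h) = cst t * ((xr i)^-1 * TI i h).
  by move=> h; rewrite -{1}(TTTI hi h) TT_xinv.
rewrite !DD_def hX; congr (cst t * ((xr i)^-1 * _)).
rewrite (linB (lin_TI hi)) (linZ (lin_TI hi)); congr (_ - cst _ * _).
set u := YY i (TI i f).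
have Hh : YY i.+1 f = cst t * TI i u.
  have := YR (TI i f) hi; rewrite TTTI // => E.
  by rewrite -[LHS](TITT hi) E (linZ (lin_TI hi)).
have h1 : (0 < i.+1)%N by [].
rewrite Hh !(linD (lin_TI hi), linZ (lin_TI hi), linZ (lin_SS h1)).
rewrite (S_rec _ hi) TI_quad // mulrDr Ht.
ring.
Qed.

Lemma R2 i f : (0 < i < n)%N -> TT i (DD i f) = DD i.+1 (TT i f) + cst (t - 1) * DD i f.
Proof.
move=> hi.
have E : DD i.+1 (TT i f) = cst t * TI i (DD i f).
  have := R1 (TT i f) hi; rewrite TITT // => E.
  by rewrite -[LHS](TITT hi) E (linZ (lin_TI hi)).
rewrite E TI_def mulrDr Ht mulrA -cstM.
have -> : t * (t^-1 - 1) = - (t - 1) by field.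
rewrite cstN; ring.
Qed.

Lemma R3 i j f : (0 < i < n)%N -> (0 < j <= n)%N -> j != i -> j != i.+1 ->
  TT i (DD j f) = DD j (TT i f).
Proof.
move=> hi hj h1 h2.
rewrite !DD_def TT_xo //; congr (_ * _).
have HS : TT i (SS j (YY j f)) = SS j (TT i (YY j f)).
  case: (ltnP j i) => hji; first by apply: S_comm; lia.
  by apply: S_above => //; move/eqP: h1; move/eqP: h2; lia.
rewrite (linB (lin_T hi)) (linZ (lin_T hi)) (linD (lin_T hi)) (linZ (lin_T hi)) HS.
by rewrite !YC.
Qed.

Lemma R1' i f : (0 < i < n)%N -> T i (D_op q t i.+1 f) = cst t * D_op q t i (Ti i f).
Proof. by move=> hi; rewrite !D_opE TTE TIE R1. Qed.
Lemma R2' i f : (0 < i < n)%N ->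
  T i (D_op q t i f) = D_op q t i.+1 (T i f) + cst (t - 1) * D_op q t i f.
Proof. by move=> hi; rewrite !D_opE !TTE R2. Qed.
Lemma R3' i j f : (0 < i < n)%N -> (0 < j <= n)%N -> j != i -> j != i.+1 ->
  T i (D_op q t j f) = D_op q t j (T i f).
Proof. by move=> *; rewrite !D_opE !TTE R3. Qed.

End Hecke.

Lemma X_neq0 (i : 'I_2) : ('X_i : {mpoly rat[2]}) != 0.
Proof.
apply/eqP => /(congr1 (mcoeff U_(i))).
by rewrite mcoeffXU eqxx mcoeff0 => /eqP; rewrite oner_eq0.
Qed.

Theorem lemma3p1 (n : nat) : (2 <= n)%N ->
  forall f : RF Qqt n, laurent f ->
  (forall i : nat, (1 <= i <= n.-1)%N ->
     T_op t0 i (D_op q0 t0 i.+1 f) = cst n t0 * D_op q0 t0 i (Tinv_op t0 i f)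
  /\ T_op t0 i (D_op q0 t0 i f)
       = D_op q0 t0 i.+1 (T_op t0 i f) + cst n (t0 - 1) * D_op q0 t0 i f)
  /\ (forall i j : nat, (1 <= i <= n.-1)%N -> (1 <= j <= n)%N ->
        j != i -> j != i.+1 ->
        T_op t0 i (D_op q0 t0 j f) = D_op q0 t0 j (T_op t0 i f)).
Proof.
move=> n2 f _.
have tn0 : t0 != 0 by rewrite /t0 tofrac_eq0 X_neq0.
have qn0 : q0 != 0 by rewrite /q0 tofrac_eq0 X_neq0.
have n0 : (0 < n)%N by lia.
split.
  move=> i hi'; have hi : (0 < i < n)%N by lia.
  split; [exact: (R1' tn0 qn0 n0 f hi) | exact: (R2' tn0 qn0 n0 f hi)].
move=> i j hi' hj' h1 h2.
have hi : (0 < i < n)%N by lia.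
have hj : (0 < j <= n)%N by lia.
exact: (R3' tn0 qn0 n0 f hi hj h1 h2).
Qed.
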